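(* Let $|\cdot|:\mathbb{R}^n\to\mathbb{R}_{\ge0}$ be an orthant-monotonic norm and let $\|\cdot\|$ be the induced matrix norm. Then for every $A=(a_{ij})\in\mathbb{R}^{n\times n}$, $\|A\|\ge\max\{|a_{11}|,\dots,|a_{nn}|\}$ (absolute values of the diagonal entries).
   Context: The induced matrix norm is $\|A\|=\max_{|x|=1}|Ax|$. A norm $|\cdot|$ on $\mathbb{R}^n$ is orthant-monotonic if for all $x,y\in\mathbb{R}^n$: whenever $x_iy_i\ge 0$ and $|x_i|\le|y_i|$ for all $i$, then $|x|\le|y|$. *)

(* Defs.v *)
From HB Require Import structures.
From mathcomp Require Import all_boot all_order all_algebra.
From mathcomp Require Import boolp classical_sets reals.
Set Implicit Arguments. Unset Strict Implicit. Unset Printing Implicit Defensive.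
Import Order.TTheory GRing.Theory Num.Theory.
Local Open Scope classical_set_scope.
Local Open Scope ring_scope.

Definition is_norm (R : realType) (n : nat) (N : 'cV[R]_n -> R) : Prop :=
  [/\ forall x, 0 <= N x,
      forall x, N x = 0 -> x = 0,
      forall (a : R) x, N (a *: x) = `|a| * N x
    & forall x y, N (x + y) <= N x + N y].

Definition orthant_monotonic (R : realType) (n : nat) (N : 'cV[R]_n -> R) : Prop :=
  forall x y : 'cV[R]_n,
    (forall i : 'I_n, 0 <= x i 0 * y i 0 /\ `|x i 0| <= `|y i 0|) -> N x <= N y.

(* Induced matrix norm ||A|| = max_{N x = 1} N (A x) (taken as a supremum; the
   max is attained by compactness). *)
Definition induced_norm (R : realType) (n : nat) (N : 'cV[R]_n -> R)
  (A : 'M[R]_n) : R :=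
  reals.sup [set N (A *m x) | x in [set x : 'cV[R]_n | N x = 1]].

(* Main.v *)
Require Import Defs.
From HB Require Import structures.
From mathcomp Require Import all_boot all_order all_algebra.
From mathcomp Require Import boolp classical_sets reals.
Import Order.TTheory GRing.Theory Num.Theory.
Local Open Scope ring_scope.

Section H.
Variables (R : realType) (n : nat) (N : 'cV[R]_n -> R).
Hypotheses (hN : is_norm N) (hom : orthant_monotonic N).

Let e (i : 'I_n) : 'cV[R]_n := delta_mx i 0.

Lemma N0 : N 0 = 0.
Proof. case: hN => _ _ hs _. by rewrite -(scale0r (0 : 'cV[R]_n)) hs normr0 mul0r. Qed.

Lemma Ne_gt0 i : 0 < N (e i).
Proof.
case: hN => h0 h1 _ _; rewrite lt_def h0 andbT; apply/eqP => /h1 /matrixP /(_ i 0).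
rewrite /e !mxE !eqxx /= => /eqP; by rewrite oner_eq0.
Qed.

Lemma coord_le (x : 'cV[R]_n) i : `|x i 0| * N (e i) <= N x.
Proof.
case: hN => _ _ hs _; rewrite -hs; apply: hom => k; rewrite !mxE.
case: (eqVneq i k) => [<-|ik] /=; rewrite ?eqxx ?mulr1 ?mulr0 ?mul0r ?normr0 //.
by rewrite -expr2 sqr_ge0.
Qed.

Lemma N_sum (I : Type) (r : seq I) (F : I -> 'cV[R]_n) :
  N (\sum_(i <- r) F i) <= \sum_(i <- r) N (F i).
Proof.
case: hN => _ _ _ ht.
elim/big_rec2: _ => [|i y1 y2 _ h]; first by rewrite N0.
exact: le_trans (ht _ _) (lerD (lexx _) h).
Qed.
End H.

Theorem lemma1 (R : realType) (n : nat) (N : 'cV[R]_n -> R)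
  (hN : is_norm N) (hom : orthant_monotonic N) (A : 'M[R]_n) :
  \big[Num.max/0]_(i < n) `|A i i| <= induced_norm N A.
Proof.
rewrite /induced_norm.
set S := (X in reals.sup X).
have ub : has_ubound S.
  exists (\sum_(j < n) N (A *m delta_mx j 0) / N (delta_mx j 0)).
  move=> _ [x /= Nx1 <-].
  case: (hN) => _ _ hs _.
  rewrite {1}(matrix_sum_delta x) mulmx_sumr.
  apply: le_trans; first exact: (@N_sum _ _ _ hN). apply: ler_sum => j _.
  rewrite big_ord1 -scalemxAr hs.
  have hp := @Ne_gt0 _ _ _ hN j.
  rewrite mulrC ler_wpM2l //.
    by case: hN.
  rewrite -[_^-1]mul1r ler_pdivlMr // -Nx1; exact: (@coord_le _ _ _ hN hom).
have key : forall i, `|A i i| <= sup S.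
  move=> i.
  case: (hN) => _ _ hs _.
  have hp := @Ne_gt0 _ _ _ hN i.
  set x0 := ((N (delta_mx i 0))^-1 *: delta_mx i 0 : 'cV[R]_n).
  apply: (@le_trans _ _ (N (A *m x0))); last first.
    apply: ub_le_sup => //; exists x0 => //.
    by rewrite /= /x0 hs ger0_norm ?invr_ge0 ?ltW // mulVf // gt_eqF.
  have := @coord_le _ _ _ hN hom (A *m x0) i.
  rewrite /x0 -scalemxAr -colE !mxE normrM ger0_norm ?invr_ge0 ?(ltW hp) //.
  by rewrite mulrAC mulVf ?gt_eqF // mul1r.
apply: bigmax_le => [|i _]; last exact: key.
have [[x Nx1]|nox] := pselect (exists x : 'cV[R]_n, N x = 1).
  apply: (@le_trans _ _ (N (A *m x))); first by case: hN.
  by apply: ub_le_sup => //; exists x.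
suff -> : S = set0 by rewrite sup0.
apply/seteqP; split => // _ [x /= Nx1 _]; apply: nox; by exists x.
Qed.
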